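(* Let $\mathbb G$ be a special 2-group with canonical classifying 3-cocycle $\alpha$, and let $(\beta,c)$, $(\beta',c')$ be character data. Then $$\mathbf{Hom}(\mathbb I_{\beta,c},\mathbb I_{\beta',c'})\simeq\begin{cases}\mathbf 1 & \text{if }\beta\ne\beta',\\ \mathbf{PRep}_{c'/c}(\pi_0(\mathbb G)) & \text{if }\beta=\beta',\end{cases}$$ (when $\beta=\beta'$, $c'/c$ is a 2-cocycle). Moreover, for any character data $(\beta,c)$, there is an equivalence of monoidal categories $\mathbf{End}(\mathbb I_{\beta,c})\simeq\mathbf{Rep}_{\mathbf{Mat}_{\mathbb C}}(\pi_0(\mathbb G))$, where $\mathbf{End}(\mathbb I_{\beta,c})$ carries the monoidal structure given by composition of 1-intertwiners and horizontal composition of 2-intertwiners, and $\mathbf{Rep}_{\mathbf{Mat}_{\mathbb C}}(\pi_0(\mathbb G))$ carries the tensor (Kronecker) product of matrix representations. In particular this holds for the trivial representation $\mathbb I$.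
   Context: A special 2-group $\mathbb G$: skeletal monoidal groupoid, strictly invertible objects, $l,r$ identities; objects form $\pi_0(\mathbb G)$; $\pi_1(\mathbb G)=\mathrm{Aut}(e)$ a $\pi_0(\mathbb G)$-module via $g\cdot u=\gamma_g^{-1}(\delta_g(u))$, $\gamma_g(u)=u\otimes\mathrm{id}_g$, $\delta_g(u)=\mathrm{id}_g\otimes u$; canonical 3-cocycle $\alpha(g_1,g_2,g_3)=\gamma^{-1}_{g_1g_2g_3}(a_{g_1,g_2,g_3})$. $\mathbf{2Mat}_{\mathbb C}$: objects $n\ge0$; for $n,m\ge1$ a 1-morphism $n\to m$ is $(\mathbf R,s)$, $\mathbf R$ an $m\times n$ matrix over $\mathbb N$, $s=(s_i)$ a gauge with $s_i(\mathbf a)\in GL((\mathbf R\mathbf a)_i,\mathbb C)$ ($=1$ if $(\mathbf R\mathbf a)_i=0$), $s_i(\mathbf e_j)=\mathbf I_{R_{ij}}$; a 2-morphism $(\mathbf R,s)\Rightarrow(\mathbf R',s')$ is an $m\times n$ array with $(i,j)$ entry an $R'_{ij}\times R_{ij}$ complex matrix if $R_{ij},R'_{ij}\ne0$, empty otherwise; vertical composition entrywise product; composition $(\tilde{\mathbf R},\tilde s)\circ(\mathbf R,s)=(\tilde{\mathbf R}\mathbf R,\tilde s\ast s)$, $(\tilde s\ast s)_k(\mathbf a)=\tilde s_k(\mathbf R\mathbf a)\big(\bigoplus_{i}\mathbf I_{\tilde R_{ki}}\otimes s_i(\mathbf a)\big)\mathbf P(\tilde{\mathbf R}_k,\mathbf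 R,\mathbf a)\big(\bigoplus_j \tilde s_k(\mathbf R\mathbf e_j)^{-1}\otimes\mathbf I_{a_j}\big)$, $\mathbf P(\cdot)$ fixed permutation matrices (identities when $\tilde{\mathbf R}_k$ or $\mathbf a$ is a standard basis vector, $\mathbf R$ an identity, or $\mathbf R$ one column); horizontal composition $(\tilde{\mathsf T}\circ\mathsf T)_{kj}=\tilde s'_k(\mathbf R'\mathbf e_j)\big(\bigoplus_i\tilde{\mathsf T}_{ki}\otimes\mathsf T_{ij}\big)\tilde s_k(\mathbf R\mathbf e_j)^{-1}$; identities $(\mathbf I_n,\mathbf I)$. $\mathfrak{Rep}_{\mathbf{2Mat}_{\mathbb C}}(\mathbb G)$: objects $(n,\mathbb F)$ with $\mathbb F=(F,F_2,F_0):\mathbb G\to\mathsf{Equiv}_{\mathbf{2Mat}_{\mathbb C}}(n)$ monoidal; 1-intertwiners $(f,\Phi)$, $f:n\to n'$, invertible $\Phi(A):F'(A)\circ f\Rightarrow f\circ F(A)$ natural in $A$ with $\Phi(A\otimes B)\cdot(F'_2(A,B)\circ1_f)=(1_f\circ F_2(A,B))\cdot(\Phi(A)\circ1_{F(B)})\cdot(1_{F'(A)}\circ\Phi(B))$ and $F'_0\circ1_f=(1_f\circ F_0)\cdot\Phi(I)$; composition $(f',\Phi')\circ(f,\Phi)=(f'\circ f,(1_{f'}\circ\Phi(A))\cdot(\Phi'(A)\circ1_f))$; 2-intertwiners $\tau:f\Rightarrow g$ with $\Psi(A)\cdot(1_{F'(A)}\circ\tau)=(\tau\circ1_{F(A)})\cdot\Phi(A)$,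 composed as 2-morphisms of $\mathbf{2Mat}_{\mathbb C}$. $\mathbf{Hom}(\mathcal F,\mathcal F')$ is the category of 1-intertwiners and 2-intertwiners; $\mathbf{End}(\mathcal F)=\mathbf{Hom}(\mathcal F,\mathcal F)$; $\mathbf 1$ is the terminal category. Character data $(\beta,c)$: $\beta:\pi_1(\mathbb G)\to\mathbb C^*$ a homomorphism with $\beta(g\cdot u)=\beta(u)$ for all $g,u$ and $[\beta\circ\alpha]=0$ in $H^3(\pi_0(\mathbb G),\mathbb C^* )$ (trivial action), and $c:\pi_0(\mathbb G)^2\to\mathbb C^*$ a normalized 2-cochain with $\partial c=\beta\circ\alpha$. The character $\mathbb I_{\beta,c}$ is the 1-dimensional representation $(1,\mathbb F)$ with $F(g)=(\mathbf I_1,\mathbf I)$, $F(\varphi)=\beta(\gamma_g^{-1}(\varphi))$ (a $1\times1$ 2-morphism) for $\varphi\in\mathrm{Aut}(g)$, $F_2(g_1,g_2)=c(g_1,g_2)$, $F_0$ identity; $\mathbb I=\mathbb I_{1,1}$ is the trivial representation. For a 2-cocycle $z\in Z^2(G,\mathbb C^* )$, $\mathbf{PRep}_z(G)$ is the category with objects pairs $(r,S)$, $r\ge0$, $S:G\to GL(r,\mathbb C)$ with $S(e)=\mathbf I_r$ and $S(g_1)S(g_2)=z(g_1,g_2)S(g_1g_2)$, and morphisms $(r,S)\to(r',S')$ the $r'\times r$ matrices $T$ with $TS(g)=S'(g)T$ for all $g$. $\mathbf{Rep}_{\mathbf{Mat}_{\mathbb C}}(G)=\mathbf{PRep}_1(G)$,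 the category of finite-dimensional matrix representations, monoidal under Kronecker product. *)

(* Defs.v *)
From HB Require Import structures.
From mathcomp Require Import all_boot all_algebra.
From mathcomp Require Import complex mxtens Rstruct.
From Stdlib Require Import ClassicalEpsilon.

Set Implicit Arguments.
Unset Strict Implicit.
Unset Printing Implicit Defensive.

Import GRing.Theory.
Local Open Scope ring_scope.

Definition C : fieldType := (Rdefinitions.R)[i].

(* A skeletal monoidal groupoid: objects form a group (strictly        *)
(* invertible objects, strict unit); a morphism phi only goes from     *)
(* s2dom phi to itself (skeletal); unitors l, r are identities.        *)
(* s2comp f g = f o g (f after g).  s2assoc x y z = a_{x,y,z}.          *)
Record special2group := Special2Group {
  s2obj : Type;
  gmul : s2obj -> s2obj -> s2obj;
  gone : s2obj;
  ginv : s2obj -> s2obj;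
  gmulA : forall x y z, gmul x (gmul y z) = gmul (gmul x y) z;
  gmul1g : forall x, gmul gone x = x;
  gmulg1 : forall x, gmul x gone = x;
  gmulVg : forall x, gmul (ginv x) x = gone;
  gmulgV : forall x, gmul x (ginv x) = gone;
  s2mor : Type;
  s2dom : s2mor -> s2obj;
  s2comp : s2mor -> s2mor -> s2mor;
  s2id : s2obj -> s2mor;
  s2inv : s2mor -> s2mor;
  s2tens : s2mor -> s2mor -> s2mor;
  s2assoc : s2obj -> s2obj -> s2obj -> s2mor;
  s2dom_id : forall x, s2dom (s2id x) = x;
  s2dom_comp : forall f g, s2dom f = s2dom g -> s2dom (s2comp f g) = s2dom f;
  s2dom_inv : forall f, s2dom (s2inv f) = s2dom f;
  s2compA : forall f g h, s2dom f = s2dom g -> s2dom g = s2dom h ->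
    s2comp f (s2comp g h) = s2comp (s2comp f g) h;
  s2comp1f : forall f, s2comp (s2id (s2dom f)) f = f;
  s2compf1 : forall f, s2comp f (s2id (s2dom f)) = f;
  s2compfV : forall f, s2comp f (s2inv f) = s2id (s2dom f);
  s2compVf : forall f, s2comp (s2inv f) f = s2id (s2dom f);
  s2dom_tens : forall f g, s2dom (s2tens f g) = gmul (s2dom f) (s2dom g);
  s2tens_id : forall x y, s2tens (s2id x) (s2id y) = s2id (gmul x y);
  s2tens_comp : forall f f' g g', s2dom f = s2dom f' -> s2dom g = s2dom g' ->
    s2tens (s2comp f f') (s2comp g g') = s2comp (s2tens f g) (s2tens f' g');
  s2dom_assoc : forall x y z, s2dom (s2assoc x y z) = gmul (gmul x y) z;
  s2assoc_nat : forall f g h,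
    s2comp (s2assoc (s2dom f) (s2dom g) (s2dom h)) (s2tens (s2tens f g) h)
    = s2comp (s2tens f (s2tens g h)) (s2assoc (s2dom f) (s2dom g) (s2dom h));
  (* unitors l, r are identities: their naturality *)
  s2tens1f : forall f, s2tens (s2id gone) f = f;
  s2tensf1 : forall f, s2tens f (s2id gone) = f;
  s2pentagon : forall x y z w,
    s2comp (s2assoc x y (gmul z w)) (s2assoc (gmul x y) z w)
    = s2comp (s2tens (s2id x) (s2assoc y z w))
        (s2comp (s2assoc x (gmul y z) w) (s2tens (s2assoc x y z) (s2id w)));
  (* triangle, with l_y = id_y and r_x = id_x *)
  s2triangle : forall x y,
    s2comp (s2tens (s2id x) (s2id y)) (s2assoc x gone y)
    = s2tens (s2id x) (s2id y)
}.

Arguments gmul {G} : rename.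
Arguments gone {G} : rename.
Arguments s2dom {G} : rename.
Arguments s2comp {G} : rename.
Arguments s2id {G} : rename.
Arguments s2tens {G} : rename.
Arguments s2assoc {G} : rename.

Section TwoGroup.
Variable G : special2group.

Definition in_pi1 (u : s2mor G) : Prop := s2dom u = gone.

Definition gamma_inv (g : s2obj G) (phi : s2mor G) : s2mor G :=
  epsilon (inhabits (s2id gone))
    (fun u => s2dom u = gone /\ s2tens u (s2id g) = phi).

Definition pi1_act (g : s2obj G) (u : s2mor G) : s2mor G :=
  gamma_inv g (s2tens (s2id g) u).

Definition alpha3 (x y z : s2obj G) : s2mor G :=
  gamma_inv (gmul (gmul x y) z) (s2assoc x y z).

Definition cobound2 (c : s2obj G -> s2obj G -> C) (x y z : s2obj G) : C :=
  c y z * c x (gmul y z) / (c (gmul x y) z * c x y).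

Definition is_2cocycle (z : s2obj G -> s2obj G -> C) : Prop :=
  (forall x y, z x y != 0) /\ (forall x y w, cobound2 z x y w = 1).

(* character data (beta, c); beta is only relevant on pi_1 *)
Definition char_data (b : s2mor G -> C) (c : s2obj G -> s2obj G -> C) : Prop :=
  [/\ forall u, in_pi1 u -> b u != 0,
      forall u v, in_pi1 u -> in_pi1 v -> b (s2comp u v) = b u * b v &
      forall g u, in_pi1 u -> b (pi1_act g u) = b u] /\
  [/\ forall x y, c x y != 0,
      forall x, (c gone x = 1 /\ c x gone = 1) &
      forall x y z, cobound2 c x y z = b (alpha3 x y z)].

End TwoGroup.

(* 2Mat_C restricted to the object 1: 1-morphisms 1 -> 1 are (r, s)    *)
(* with r : nat (a 1x1 matrix over N) and a gauge s(a) in GL(r a)      *)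
(* for a in N^1 = nat.  A 2-morphism (r,s) => (r',s') is an r' x r      *)
(* matrix (empty if r = 0 or r' = 0).                                   *)
Record mor11 := Mor11 { mr : nat; mgauge : forall a : nat, 'M[C]_(mr * a) }.

Definition is_mor11 (f : mor11) : Prop :=
  (forall a, mgauge f a \in unitmx) /\
  mgauge f 1 = castmx (esym (muln1 (mr f)), esym (muln1 (mr f))) 1%:M.

Definition id11 : mor11 :=
  Mor11 (fun a => castmx (esym (mul1n a), esym (mul1n a)) (1%:M : 'M[C]_a)).

(* composition g o f; the permutation matrix P is the identity here
   (the matrix of f has a single column) *)
Definition comp11 (g f : mor11) : mor11 :=
  @Mor11 (mr g * mr f) (fun a =>
    castmx (mulnA _ _ _, mulnA _ _ _)
      (mgauge g (mr f * a) *m ((1%:M : 'M[C]_(mr g)) *t mgauge f a))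
    *m (invmx (mgauge g (mr f)) *t (1%:M : 'M[C]_a))).

Definition mor2 (f g : mor11) := 'M[C]_(mr g, mr f).
Definition id2 (f : mor11) : mor2 f f := 1%:M.

Definition hcomp (f' g' f g : mor11) (t' : mor2 f' g') (t : mor2 f g)
  : mor2 (comp11 f' f) (comp11 g' g) :=
  mgauge g' (mr g) *m (t' *t t) *m invmx (mgauge f' (mr f)).
Arguments hcomp : clear implicits.

Record rep1 (G : special2group) := Rep1 {
  Fob : s2obj G -> mor11;
  Fmor : forall phi : s2mor G, mor2 (Fob (s2dom phi)) (Fob (s2dom phi));
  F2 : forall x y : s2obj G, mor2 (comp11 (Fob x) (Fob y)) (Fob (gmul x y));
  F0 : mor2 (Fob gone) id11
}.

Definition Ichar (G : special2group) (b : s2mor G -> C)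
  (c : s2obj G -> s2obj G -> C) : rep1 G :=
  @Rep1 G (fun _ => id11)
    (fun phi => ((b (gamma_inv (s2dom phi) phi))%:M : 'M[C]_1))
    (fun x y => ((c x y)%:M : 'M[C]_1))
    (1%:M : 'M[C]_1).

Section Intertwiners.
Variable G : special2group.

Record intw (F F' : rep1 G) := Intw {
  ifun : mor11;
  iPhi : forall x : s2obj G, mor2 (comp11 (Fob F' x) ifun) (comp11 ifun (Fob F x))
}.

Definition is_intw (F F' : rep1 G) (X : intw F F') : Prop :=
  let f := ifun X in let Phi := iPhi X in
  [/\ is_mor11 f,
      forall x, exists Psi : mor2 (comp11 f (Fob F x)) (comp11 (Fob F' x) f),
        Psi *m Phi x = 1%:M /\ Phi x *m Psi = 1%:M,
      forall phi : s2mor G,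
        Phi (s2dom phi)
          *m hcomp (Fob F' (s2dom phi)) (Fob F' (s2dom phi)) f f
               (Fmor F' phi) (id2 f)
        = hcomp f f (Fob F (s2dom phi)) (Fob F (s2dom phi))
            (id2 f) (Fmor F phi)
          *m Phi (s2dom phi),
      (* compatibility with F2 (strict associativity of 2Mat_C on the
         object 1 is used, made explicit by the dimension casts) *)
      forall x y,
        Phi (gmul x y)
          *m hcomp (comp11 (Fob F' x) (Fob F' y)) (Fob F' (gmul x y)) f f
               (F2 F' x y) (id2 f)
        = hcomp f f (comp11 (Fob F x) (Fob F y)) (Fob F (gmul x y))
            (id2 f) (F2 F x y)
          *m castmx (esym (mulnA _ _ _), erefl)
               (hcomp (comp11 (Fob F' x) f) (comp11 f (Fob F x))
                  (Fob F y) (Fob F y) (Phi x) (id2 (Fob F y)))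
          *m castmx (mulnA _ _ _, mulnA _ _ _)
               (hcomp (Fob F' x) (Fob F' x)
                  (comp11 (Fob F' y) f) (comp11 f (Fob F y))
                  (id2 (Fob F' x)) (Phi y)) &
      (* compatibility with F0 (unit laws 1 o f = f = f o 1) *)
      castmx (etrans (mul1n _) (esym (muln1 _)), erefl)
          (hcomp (Fob F' gone) id11 f f (F0 F') (id2 f))
        = hcomp f f (Fob F gone) id11 (id2 f) (F0 F) *m Phi gone].

Definition is_2intw (F F' : rep1 G) (X Y : intw F F')
  (t : mor2 (ifun X) (ifun Y)) : Prop :=
  forall x,
    iPhi Y x *m hcomp (Fob F' x) (Fob F' x) (ifun X) (ifun Y) (id2 (Fob F' x)) t
    = hcomp (ifun X) (ifun Y) (Fob F x) (Fob F x) t (id2 (Fob F x)) *m iPhi X x.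

Definition intw_comp (F F' F'' : rep1 G) (Y : intw F' F'') (X : intw F F')
  : intw F F'' :=
  @Intw F F'' (comp11 (ifun Y) (ifun X)) (fun x =>
    castmx (mulnA _ _ _, erefl)
      (hcomp (ifun Y) (ifun Y)
         (comp11 (Fob F' x) (ifun X)) (comp11 (ifun X) (Fob F x))
         (id2 (ifun Y)) (iPhi X x)
       *m castmx (esym (mulnA _ _ _), esym (mulnA _ _ _))
            (hcomp (comp11 (Fob F'' x) (ifun Y)) (comp11 (ifun Y) (Fob F' x))
               (ifun X) (ifun X) (iPhi Y x) (id2 (ifun X))))).

Definition intw_id (F : rep1 G) : intw F F :=
  @Intw F F id11 (fun x =>
    castmx (esym (mul1n _), esym (muln1 _)) (1%:M : 'M[C]_(mr (Fob F x)))).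

End Intertwiners.

(* Categories, presented by raw objects/morphisms and validity         *)
(* predicates (the category is the valid part).                        *)
Record cat := Cat {
  cob : Type;
  cobP : cob -> Prop;
  chom : cob -> cob -> Type;
  chomP : forall x y, chom x y -> Prop;
  cid : forall x, chom x x;
  ccomp : forall x y z, chom y z -> chom x y -> chom x z
}.
Arguments cob : clear implicits.
Arguments chom : clear implicits.
Arguments cobP {c} : rename.
Arguments chomP {c x y} : rename.
Arguments cid {c} : rename.
Arguments ccomp {c x y z} : rename.

Record functor (A B : cat) := Functor {
  fob : cob A -> cob B;
  fhom : forall x y, chom A x y -> chom B (fob x) (fob y)
}.
Arguments fhom {A B} F {x y} : rename.

Definition is_functor (A B : cat) (F : functor A B) : Prop :=
  [/\ forall x, cobP x -> cobP (fob F x),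
      forall x y (f : chom A x y), cobP x -> cobP y -> chomP f ->
        chomP (fhom F f),
      forall x, cobP x -> fhom F (cid x) = cid (fob F x) &
      forall x y z (g : chom A y z) (f : chom A x y),
        cobP x -> cobP y -> cobP z -> chomP g -> chomP f ->
        fhom F (ccomp g f) = ccomp (fhom F g) (fhom F f)].

Definition is_iso (A : cat) (x y : cob A) (f : chom A x y) : Prop :=
  chomP f /\ exists g : chom A y x,
    [/\ chomP g, ccomp g f = cid x & ccomp f g = cid y].

Definition fully_faithful (A B : cat) (F : functor A B) : Prop :=
  forall x y, cobP x -> cobP y ->
    (forall f f' : chom A x y, chomP f -> chomP f' ->
       fhom F f = fhom F f' -> f = f') /\
    (forall g : chom B (fob F x) (fob F y), chomP g ->
       exists f : chom A x y, chomP f /\ fhom F f = g).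

Definition ess_surj (A B : cat) (F : functor A B) : Prop :=
  forall b, cobP b -> exists x, cobP x /\
    exists f : chom B (fob F x) b, is_iso f.

Definition cat_equiv (A B : cat) : Prop :=
  exists F : functor A B, [/\ is_functor F, fully_faithful F & ess_surj F].

Definition unitCat : cat :=
  @Cat unit (fun _ => True) (fun _ _ => unit) (fun _ _ _ => True)
    (fun _ => tt) (fun _ _ _ _ _ => tt).

Definition HomCat (G : special2group) (F F' : rep1 G) : cat :=
  @Cat (intw F F') (@is_intw G F F')
    (fun X Y => mor2 (ifun X) (ifun Y)) (@is_2intw G F F')
    (fun X => id2 (ifun X)) (fun X Y Z t s => t *m s).

Record prep (G : special2group) := PRep { pr : nat; pS : s2obj G -> 'M[C]_pr }.

Definition PRepCat (G : special2group) (z : s2obj G -> s2obj G -> C) : cat :=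
  @Cat (prep G)
    (fun X => [/\ forall g, pS X g \in unitmx, pS X gone = 1%:M &
                 forall g h, pS X g *m pS X h = z g h *: pS X (gmul g h)])
    (fun X Y => 'M[C]_(pr Y, pr X))
    (fun X Y T => forall g, T *m pS X g = pS Y g *m T)
    (fun X => 1%:M) (fun X Y Z T S => T *m S).

Arguments PRepCat : clear implicits.

Record moncat := MonCat {
  mcat :> cat;
  mtensO : cob mcat -> cob mcat -> cob mcat;
  mtensH : forall x x' y y', chom mcat x x' -> chom mcat y y' ->
    chom mcat (mtensO x y) (mtensO x' y');
  munit : cob mcat;
  massocM : forall x y z,
    chom mcat (mtensO (mtensO x y) z) (mtensO x (mtensO y z));
  mlunit : forall x, chom mcat (mtensO munit x) x;
  mrunit : forall x, chom mcat (mtensO x munit) x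
}.
Arguments mtensO {m} : rename.
Arguments mtensH {m x x' y y'} : rename.
Arguments munit {m} : rename.
Arguments massocM {m} : rename.
Arguments mlunit {m} : rename.
Arguments mrunit {m} : rename.

Record monfunctor (A B : moncat) := MonFunctor {
  mfun :> functor A B;
  mfmu : forall x y,
    chom B (mtensO (fob mfun x) (fob mfun y)) (fob mfun (mtensO x y));
  mfeps : chom B munit (fob mfun munit)
}.

Definition is_strong_monoidal (A B : moncat) (F : monfunctor A B) : Prop :=
  [/\ is_functor F,
      forall x y, cobP x -> cobP y -> is_iso (mfmu F x y) &
      is_iso (mfeps F)] /\
  [/\
      forall x x' y y' (f : chom A x x') (g : chom A y y'),
        cobP x -> cobP x' -> cobP y -> cobP y' -> chomP f -> chomP g ->
        ccomp (fhom F (mtensH f g)) (mfmu F x y)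
        = ccomp (mfmu F x' y') (mtensH (fhom F f) (fhom F g)),
      forall x y z, cobP x -> cobP y -> cobP z ->
        ccomp (fhom F (massocM x y z))
          (ccomp (mfmu F (mtensO x y) z) (mtensH (mfmu F x y) (cid (fob F z))))
        = ccomp (mfmu F x (mtensO y z))
            (ccomp (mtensH (cid (fob F x)) (mfmu F y z))
               (massocM (fob F x) (fob F y) (fob F z))),
      forall x, cobP x ->
        ccomp (fhom F (mlunit x))
          (ccomp (mfmu F munit x) (mtensH (mfeps F) (cid (fob F x))))
        = mlunit (fob F x) &
      forall x, cobP x ->
        ccomp (fhom F (mrunit x))
          (ccomp (mfmu F x munit) (mtensH (cid (fob F x)) (mfeps F)))
        = mrunit (fob F x)].

Definition monoidal_equiv (A B : moncat) : Prop :=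
  exists F : monfunctor A B,
    [/\ is_strong_monoidal F, fully_faithful F & ess_surj F].

(* End(F) with tensor = composition of 1-intertwiners (X (x) Y = X o Y)
   and horizontal composition of 2-intertwiners; 2Mat_C is strictly
   associative and unital on the object 1, so associator and unitors are
   identity matrices (up to dimension casts). *)
Definition EndMon (G : special2group) (F : rep1 G) : moncat :=
  @MonCat (HomCat F F)
    (fun X Y => intw_comp X Y)
    (fun X X' Y Y' t s => hcomp (ifun X) (ifun X') (ifun Y) (ifun Y') t s)
    (intw_id F)
    (fun X Y Z => castmx (erefl, mulnA _ _ _) 1%:M)
    (fun X => castmx (erefl, esym (mul1n _)) 1%:M)
    (fun X => castmx (erefl, esym (muln1 _)) 1%:M).

Definition RepMon (G : special2group) : moncat :=
  @MonCat (PRepCat G (fun _ _ => 1))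
    (fun X Y => @PRep G (pr X * pr Y) (fun g => pS X g *t pS Y g))
    (fun X X' Y Y' T S => T *t S)
    (@PRep G 1 (fun _ => 1%:M))
    (fun X Y Z => castmx (erefl, mulnA _ _ _) 1%:M)
    (fun X => castmx (erefl, esym (mul1n _)) 1%:M)
    (fun X => castmx (erefl, esym (muln1 _)) 1%:M).

(* Main.v *)
Require Import Defs.
From HB Require Import structures.
From mathcomp Require Import all_boot all_algebra.
From mathcomp Require Import complex mxtens.
From mathcomp Require Import ring.
From Stdlib Require Import ClassicalEpsilon.
Set Implicit Arguments.
Unset Strict Implicit.
Unset Printing Implicit Defensive.
Import GRing.Theory.
Local Open Scope ring_scope.


Definition mxeq m n m' n' (A : 'M[C]_(m, n)) (B : 'M[C]_(m', n')) : Prop :=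
  exists e : (m = m') * (n = n'), castmx e A = B.
Infix "=~" := mxeq (at level 70).

Lemma mxeq_refl m n (A : 'M[C]_(m,n)) : A =~ A.
Proof. by exists (erefl, erefl); rewrite castmx_id. Qed.

Lemma mxeq_sym m n m' n' (A : 'M[C]_(m, n)) (B : 'M[C]_(m', n')) : A =~ B -> B =~ A.
Proof.
case=> [[e1 e2] <-]; exists (esym e1, esym e2); by rewrite castmxK.
Qed.

Lemma mxeq_trans m n m' n' m'' n'' (A : 'M[C]_(m, n)) (B : 'M[C]_(m', n'))
  (D : 'M[C]_(m'', n'')) : A =~ B -> B =~ D -> A =~ D.
Proof.
case=> [[e1 e2] <-] [[e3 e4] <-]; exists (etrans e1 e3, etrans e2 e4).
by rewrite castmx_comp.
Qed.

Lemma mxeq_castl m n m' n' (e : (m = m') * (n = n')) (A : 'M[C]_(m, n)) :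
  castmx e A =~ A.
Proof. by apply: mxeq_sym; exists e. Qed.

Lemma mxeqE m n (A B : 'M[C]_(m, n)) : A =~ B -> A = B.
Proof.
case=> [[e1 e2] <-]. by rewrite (eq_irrelevance e1 erefl) (eq_irrelevance e2 erefl) castmx_id.
Qed.

Lemma mxeq_dims m n m' n' (A : 'M[C]_(m, n)) (B : 'M[C]_(m', n')) :
  A =~ B -> (m = m') /\ (n = n').
Proof. by case=> [[e1 e2] _]. Qed.

Lemma mxeq_mul m n p m' n' p' (A : 'M[C]_(m, n)) (B : 'M[C]_(n, p))
  (A' : 'M[C]_(m', n')) (B' : 'M[C]_(n', p')) :
  A =~ A' -> B =~ B' -> A *m B =~ A' *m B'.
Proof.
case=> [[e1 e2] E1] [[e3 e4] E2]; subst A' B' m' n' p'.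
rewrite (eq_irrelevance e3 erefl) !castmx_id; exact: mxeq_refl.
Qed.

Lemma mxeq_tens m n p q m' n' p' q' (A : 'M[C]_(m, n)) (B : 'M[C]_(p, q))
  (A' : 'M[C]_(m', n')) (B' : 'M[C]_(p', q')) :
  A =~ A' -> B =~ B' -> A *t B =~ A' *t B'.
Proof.
case=> [[e1 e2] E1] [[e3 e4] E2]; subst A' B' m' n' p' q'.
rewrite !castmx_id; exact: mxeq_refl.
Qed.

Lemma mxeq_inv n n' (A : 'M[C]_n) (A' : 'M[C]_n') :
  A =~ A' -> invmx A =~ invmx A'.
Proof.
case=> [[e1 e2] E1]; subst A' n'.
rewrite (eq_irrelevance e2 erefl) castmx_id; exact: mxeq_refl.
Qed.

Lemma mxeq_scale m n m' n' (k : C) (A : 'M[C]_(m, n)) (A' : 'M[C]_(m', n')) :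
  A =~ A' -> k *: A =~ k *: A'.
Proof.
case=> [[e1 e2] E1]; subst A' m' n'.
rewrite castmx_id; exact: mxeq_refl.
Qed.

Lemma mxeq_scalar m m' (k : C) : m = m' -> (k%:M : 'M[C]_m) =~ (k%:M : 'M[C]_m').
Proof. move=> e; case: m' / e; exact: mxeq_refl. Qed.

Lemma tens11 m n : (1%:M : 'M[C]_m) *t (1%:M : 'M[C]_n) = 1%:M.
Proof.
apply/matrixP=> i j.
case: (mxtens_indexP i)=> i0 i1; case: (mxtens_indexP j)=> j0 j1.
rewrite tensmxE !mxE.
have -> : (mxtens_index (i0, i1) == mxtens_index (j0, j1)) = ((i0 == j0) && (i1 == j1)).
  apply/idP/idP.
    by move/eqP=> /(can_inj (@mxtens_indexK _ _)) [-> ->]; rewrite !eqxx.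
  by case/andP=> /eqP -> /eqP ->.
by case: (i0 == j0); case: (i1 == j1); rewrite /= ?mulr1 ?mulr0 ?mul0r.
Qed.

Lemma mxeq_tens1l m n (A : 'M[C]_(m, n)) : (1%:M : 'M[C]_1) *t A =~ A.
Proof. rewrite tens_scalar1mx; exact: mxeq_castl. Qed.

Lemma mxeq_tens1r m n (A : 'M[C]_(m, n)) : A *t (1%:M : 'M[C]_1) =~ A.
Proof. rewrite tens_mx_scalar scale1r; exact: mxeq_castl. Qed.

Lemma mxeq_tenssl m n (k : C) (A : 'M[C]_(m, n)) : (k%:M : 'M[C]_1) *t A =~ k *: A.
Proof. rewrite tens_scalar_mx; exact: mxeq_castl. Qed.

Lemma mxeq_tenssr m n (k : C) (A : 'M[C]_(m, n)) : A *t (k%:M : 'M[C]_1) =~ k *: A.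
Proof. rewrite tens_mx_scalar; exact: mxeq_castl. Qed.

Lemma mxeq_gauge (f : mor11) a a' : a = a' -> mgauge f a =~ mgauge f a'.
Proof. by move=> ->; exact: mxeq_refl. Qed.

Lemma mx_dim0r m n (A B : 'M[C]_(m, n)) : m = 0%N -> A = B.
Proof. move=> e; subst m; apply/matrixP=> [[]]; done. Qed.

Lemma mx_dim0c m n (A B : 'M[C]_(m, n)) : n = 0%N -> A = B.
Proof. move=> e; subst n; apply/matrixP=> i [[]]; done. Qed.
Section Grp.
Variable G : special2group.

Lemma s2_cancelV (a v : s2mor G) : s2dom v = s2dom a ->
  s2comp (s2inv a) (s2comp a v) = v.
Proof.
move=> dv.
rewrite s2compA ?s2dom_inv // s2compVf -dv s2comp1f //.
Qed.

Lemma gamma_exists (phi : s2mor G) :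
  exists u, s2dom u = gone /\ s2tens u (s2id (s2dom phi)) = phi.
Proof.
set x := s2dom phi.
set a := s2assoc x (ginv x) x.
have da : s2dom a = x by rewrite /a s2dom_assoc gmulgV gmul1g.
set w := s2comp a (s2comp phi (s2inv a)).
have dpa : s2dom (s2comp phi (s2inv a)) = x.
  by rewrite s2dom_comp // s2dom_inv da.
have dw : s2dom w = x by rewrite /w s2dom_comp ?da ?dpa.
exists (s2tens w (s2id (ginv x))); split.
  by rewrite s2dom_tens dw s2dom_id gmulgV.
have nat1 := s2assoc_nat w (s2id (ginv x)) (s2id x).
rewrite dw !s2dom_id -/a s2tens_id gmulVg s2tensf1 in nat1.
have dv : s2dom (s2tens (s2tens w (s2id (ginv x))) (s2id x)) = s2dom a.
  by rewrite !s2dom_tens dw !s2dom_id gmulgV gmul1g da.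
rewrite -(s2_cancelV dv) nat1 /w.
rewrite -s2compA ?dpa ?da //.
rewrite -s2compA ?s2dom_inv ?da //.
rewrite s2compVf da -/x s2compf1.
by rewrite s2_cancelV.
Qed.

Lemma gamma_inv_pi1 (x : s2obj G) (phi : s2mor G) : s2dom phi = x ->
  in_pi1 (gamma_inv x phi).
Proof.
move=> <-; rewrite /in_pi1 /gamma_inv.
by case: (epsilon_spec (inhabits (s2id gone))
  (fun u => s2dom u = gone /\ s2tens u (s2id (s2dom phi)) = phi) (gamma_exists phi)).
Qed.

Lemma gamma_inv_e (u : s2mor G) : in_pi1 u -> gamma_inv gone u = u.
Proof.
move=> du; rewrite /gamma_inv.
case: (epsilon_spec (inhabits (s2id gone))
  (fun v => s2dom v = gone /\ s2tens v (s2id gone) = u)).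
  by exists u; rewrite s2tensf1.
by move=> _; rewrite s2tensf1.
Qed.

End Grp.


Lemma mxeq_iff m n m' n' (A B : 'M[C]_(m, n)) (A' B' : 'M[C]_(m', n')) :
  A =~ A' -> B =~ B' -> (A = B <-> A' = B').
Proof.
move=> hA hB; split=> E.
  apply: mxeqE; apply: mxeq_trans (mxeq_sym hA) _; rewrite E; exact: hB.
apply: mxeqE; apply: mxeq_trans hA _; rewrite E; exact: mxeq_sym.
Qed.

Lemma g_id a : mgauge id11 a =~ (1%:M : 'M[C]_a).
Proof. exact: mxeq_castl. Qed.

Lemma g_one f : is_mor11 f -> mgauge f 1 =~ (1%:M : 'M[C]_(mr f)).
Proof. by case=> _ ->; exact: mxeq_castl. Qed.

Lemma mxeq_castL m n m' n' m'' n'' (e : (m = m') * (n = n')) (A : 'M[C]_(m, n))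
  (B : 'M[C]_(m'', n'')) : A =~ B -> castmx e A =~ B.
Proof. exact: mxeq_trans (mxeq_castl _ _). Qed.

Lemma g_comp_f1 f a : is_mor11 f -> mgauge (comp11 f id11) a =~ mgauge f a.
Proof.
move=> Hf; rewrite /comp11 /=.
apply: mxeq_trans (mxeq_mul (mxeq_castL _ (mxeq_mul (mxeq_gauge f (mul1n a))
   (mxeq_tens (mxeq_refl _) (g_id a)))) (mxeq_tens (mxeq_inv (g_one Hf)) (mxeq_refl _))) _.
rewrite invmx1 !tens11 !mulmx1; exact: mxeq_refl.
Qed.

Lemma g_comp_1f f a : mgauge (comp11 id11 f) a =~ mgauge f a.
Proof.
rewrite /comp11 /=.
apply: mxeq_trans (mxeq_mul (mxeq_castL _ (mxeq_mul (g_id _) (mxeq_tens1l _)))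
   (mxeq_tens (mxeq_inv (g_id _)) (mxeq_refl _))) _.
rewrite invmx1 !tens11 mulmx1 mul1mx; exact: mxeq_refl.
Qed.

Lemma hc_scal_l f' g' f (t : 'M[C]_(mr g', mr f')) (k : C) :
  (forall a, mgauge g' a =~ (1%:M : 'M[C]_a)) ->
  (forall a, mgauge f' a =~ (1%:M : 'M[C]_a)) ->
  t =~ (k%:M : 'M[C]_1) ->
  hcomp f' g' f f t (id2 f) =~ k *: (1%:M : 'M[C]_(mr f)).
Proof.
move=> Hg Hf' Ht; rewrite /hcomp /id2.
have H1 := mxeq_trans (mxeq_tens Ht (mxeq_refl (1%:M : 'M[C]_(mr f)))) (mxeq_tenssl _ _).
have H2 := mxeq_mul (Hg (mr f)) H1.
have H3 := mxeq_mul H2 (mxeq_inv (Hf' (mr f))).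
apply: mxeq_trans H3 _.
rewrite invmx1 mulmx1 mul1mx; exact: mxeq_refl.
Qed.

Lemma hc_scal_r f' g' f (t : 'M[C]_(mr g', mr f')) (k : C) :
  mgauge f 1 =~ (1%:M : 'M[C]_(mr f)) -> mr g' = 1%N -> mr f' = 1%N ->
  t =~ (k%:M : 'M[C]_1) ->
  hcomp f f f' g' (id2 f) t =~ k *: (1%:M : 'M[C]_(mr f)).
Proof.
move=> Hf Hg Hf' Ht; rewrite /hcomp /id2.
have H1 := mxeq_trans (mxeq_tens (mxeq_refl (1%:M : 'M[C]_(mr f))) Ht) (mxeq_tenssr _ _).
have H2 := mxeq_mul (mxeq_trans (mxeq_gauge f Hg) Hf) H1.
have H3 := mxeq_mul H2 (mxeq_inv (mxeq_trans (mxeq_gauge f Hf') Hf)).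
apply: mxeq_trans H3 _.
rewrite invmx1 mulmx1 mul1mx; exact: mxeq_refl.
Qed.

Lemma hc_t_l f g (t : 'M[C]_(mr g, mr f)) :
  hcomp id11 id11 f g (id2 id11) t =~ t.
Proof.
rewrite /hcomp /id2.
have H2 := mxeq_mul (g_id (mr g)) (mxeq_tens1l t).
have H3 := mxeq_mul H2 (mxeq_inv (g_id (mr f))).
apply: mxeq_trans H3 _.
rewrite invmx1 mulmx1 mul1mx; exact: mxeq_refl.
Qed.

Lemma hc_t_r f g (t : 'M[C]_(mr g, mr f)) :
  mgauge f 1 =~ (1%:M : 'M[C]_(mr f)) -> mgauge g 1 =~ (1%:M : 'M[C]_(mr g)) ->
  hcomp f g id11 id11 t (id2 id11) =~ t.
Proof.
move=> Hf Hg; rewrite /hcomp /id2.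
have H2 := mxeq_mul Hg (mxeq_tens1r t).
have H3 := mxeq_mul H2 (mxeq_inv Hf).
apply: mxeq_trans H3 _.
rewrite invmx1 mulmx1 mul1mx; exact: mxeq_refl.
Qed.

Lemma one_f1 f : is_mor11 f ->
  mgauge (comp11 f id11) 1 =~ (1%:M : 'M[C]_(mr (comp11 f id11))).
Proof.
move=> Hf; apply: mxeq_trans (g_comp_f1 _ Hf) _.
apply: mxeq_trans (g_one Hf) _; apply: mxeq_scalar; by rewrite /= muln1.
Qed.

Lemma one_1f f : is_mor11 f ->
  mgauge (comp11 id11 f) 1 =~ (1%:M : 'M[C]_(mr (comp11 id11 f))).
Proof.
move=> Hf; apply: mxeq_trans (g_comp_1f _ _) _.
apply: mxeq_trans (g_one Hf) _; apply: mxeq_scalar; by rewrite /= mul1n.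
Qed.

Lemma g_id11 a : mgauge (comp11 id11 id11) a =~ (1%:M : 'M[C]_a).
Proof. exact: mxeq_trans (g_comp_1f _ _) (g_id _). Qed.


Section Chars.
Variable G : special2group.
Variables (b b' : s2mor G -> C) (c c' : s2obj G -> s2obj G -> C).
Local Notation F := (Ichar b c).
Local Notation F' := (Ichar b' c').

Definition Pm (X : intw F F') x : 'M[C]_(mr (ifun X)) :=
  castmx (muln1 _, mul1n _) (iPhi X x).

Lemma Pm_eq (X : intw F F') x : iPhi X x =~ Pm X x.
Proof. exact: mxeq_sym (mxeq_castl _ _). Qed.

Lemma L_nat (X : intw F F') phi : is_mor11 (ifun X) ->
  (iPhi X (s2dom phi)
     *m hcomp (Fob F' (s2dom phi)) (Fob F' (s2dom phi)) (ifun X) (ifun X)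
          (Fmor F' phi) (id2 (ifun X))
   = hcomp (ifun X) (ifun X) (Fob F (s2dom phi)) (Fob F (s2dom phi))
       (id2 (ifun X)) (Fmor F phi)
     *m iPhi X (s2dom phi))
  <-> Pm X (s2dom phi) *m (b' (gamma_inv (s2dom phi) phi) *: 1%:M)
      = (b (gamma_inv (s2dom phi) phi) *: 1%:M) *m Pm X (s2dom phi).
Proof.
move=> Hf; apply: mxeq_iff.
  apply: mxeq_mul; first exact: Pm_eq.
  by apply: hc_scal_l; [exact: g_id | exact: g_id | exact: mxeq_refl].
apply: mxeq_mul; last exact: Pm_eq.
by apply: hc_scal_r => //; [exact: g_one | exact: mxeq_refl].
Qed.

Lemma L_F2 (X : intw F F') x y : is_mor11 (ifun X) ->
  (iPhi X (gmul x y)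
          *m hcomp (comp11 (Fob F' x) (Fob F' y)) (Fob F' (gmul x y)) (ifun X) (ifun X)
               (F2 F' x y) (id2 (ifun X))
        = hcomp (ifun X) (ifun X) (comp11 (Fob F x) (Fob F y)) (Fob F (gmul x y))
            (id2 (ifun X)) (F2 F x y)
          *m castmx (esym (mulnA _ _ _), erefl)
               (hcomp (comp11 (Fob F' x) (ifun X)) (comp11 (ifun X) (Fob F x))
                  (Fob F y) (Fob F y) (iPhi X x) (id2 (Fob F y)))
          *m castmx (mulnA _ _ _, mulnA _ _ _)
               (hcomp (Fob F' x) (Fob F' x)
                  (comp11 (Fob F' y) (ifun X)) (comp11 (ifun X) (Fob F y))
                  (id2 (Fob F' x)) (iPhi X y)))
  <-> Pm X (gmul x y) *m (c' x y *: 1%:M)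
      = (c x y *: 1%:M) *m Pm X x *m Pm X y.
Proof.
move=> Hf; apply: mxeq_iff.
  apply: mxeq_mul; first exact: Pm_eq.
  by apply: hc_scal_l; [exact: g_id | exact: g_id11 | exact: mxeq_refl].
apply: mxeq_mul; last first.
  by apply: mxeq_castL; apply: mxeq_trans (hc_t_l _) (Pm_eq _ _).
apply: mxeq_mul.
  by apply: hc_scal_r => //; [exact: g_one | exact: mxeq_refl].
apply: mxeq_castL; apply: mxeq_trans (hc_t_r _ _ _) (Pm_eq _ _).
  exact: one_1f.
exact: one_f1.
Qed.

Lemma L_F0 (X : intw F F') : is_mor11 (ifun X) ->
  (castmx (etrans (mul1n _) (esym (muln1 _)), erefl)
          (hcomp (Fob F' gone) id11 (ifun X) (ifun X) (F0 F') (id2 (ifun X)))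
        = hcomp (ifun X) (ifun X) (Fob F gone) id11 (id2 (ifun X)) (F0 F) *m iPhi X gone)
  <-> (1 *: 1%:M : 'M[C]_(mr (ifun X))) = (1 *: 1%:M) *m Pm X gone.
Proof.
move=> Hf; apply: mxeq_iff.
  apply: mxeq_castL.
  by apply: (@hc_scal_l (Fob F' gone) id11 (ifun X) (F0 F') 1); [exact: g_id | exact: g_id | exact: mxeq_refl].
apply: mxeq_mul; last exact: Pm_eq.
by apply: (@hc_scal_r (Fob F gone) id11 (ifun X) (F0 F) 1) => //; [exact: g_one | exact: mxeq_refl].
Qed.

Lemma L_inv (X : intw F F') x :
  (exists Psi : mor2 (comp11 (ifun X) (Fob F x)) (comp11 (Fob F' x) (ifun X)),
        Psi *m iPhi X x = 1%:M /\ iPhi X x *m Psi = 1%:M)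
  <-> Pm X x \in unitmx.
Proof.
split.
  case=> Psi [H1 H2].
  have E : castmx (mul1n _, muln1 _) Psi *m Pm X x = 1%:M.
    apply: mxeqE; apply: mxeq_trans (mxeq_mul (mxeq_castl _ _) (mxeq_sym (Pm_eq _ _))) _.
    rewrite H1; apply: mxeq_scalar; by rewrite /= ?mul1n ?muln1.
  by case: (mulmx1_unit E).
move=> Hu.
exists (castmx (esym (mul1n _), esym (muln1 _)) (invmx (Pm X x))); split.
  apply: mxeqE; apply: mxeq_trans (mxeq_mul (mxeq_castl _ _) (Pm_eq _ _)) _.
  rewrite mulVmx //; apply: mxeq_scalar; by rewrite /= ?mul1n ?muln1.
apply: mxeqE; apply: mxeq_trans (mxeq_mul (Pm_eq _ _) (mxeq_castl _ _)) _.
rewrite mulmxV //; apply: mxeq_scalar; by rewrite /= ?mul1n ?muln1.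
Qed.

Lemma L_2intw (X Y : intw F F') (t : mor2 (ifun X) (ifun Y)) :
  is_mor11 (ifun X) -> is_mor11 (ifun Y) ->
  @is_2intw G F F' X Y t <-> forall x, Pm Y x *m t = t *m Pm X x.
Proof.
move=> HX HY.
have E x := mxeq_iff (mxeq_mul (Pm_eq Y x) (hc_t_l t))
   (mxeq_mul (hc_t_r t (g_one HX) (g_one HY)) (Pm_eq X x)).
by split=> H x; [apply/(E x).1; exact: H | apply/(E x).2; exact: H].
Qed.

End Chars.


Section Fun.
Variable G : special2group.
Variables (b b' : s2mor G -> C) (c c' : s2obj G -> s2obj G -> C).
Variable z : s2obj G -> s2obj G -> C.
Local Notation F := (Ichar b c).
Local Notation F' := (Ichar b' c').

Hypothesis cnz : forall x y, c x y != 0.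
Hypothesis Hz : forall x y, z x y = c' x y / c x y.

Definition Fun : functor (HomCat F F') (PRepCat G z) :=
  @Functor (HomCat F F') (PRepCat G z)
    (fun X => @PRep G (mr (ifun X)) (Pm X)) (fun X Y t => t).

Lemma scal1_r m (A : 'M[C]_m) k : A *m (k *: 1%:M) = k *: A.
Proof. by rewrite -scalemxAr mulmx1. Qed.
Lemma scal1_l m (A : 'M[C]_m) k : (k *: 1%:M) *m A = k *: A.
Proof. by rewrite -scalemxAl mul1mx. Qed.

Lemma valid_prep (X : intw F F') : is_intw X ->
  [/\ forall g, Pm X g \in unitmx, Pm X gone = 1%:M &
      forall g h, Pm X g *m Pm X h = z g h *: Pm X (gmul g h)].
Proof.
case=> Hm Hinv Hnat HF2 HF0; split.
- by move=> g; apply/(L_inv X g).1.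
- by have := (L_F0 Hm).1 HF0; rewrite scale1r mul1mx.
move=> g h; have := (L_F2 g h Hm).1 (HF2 g h).
rewrite scal1_r -mulmxA scal1_l => E.
by rewrite Hz mulrC -scalerA E scalerA mulVf ?scale1r.
Qed.

Lemma Fun_functor : is_functor Fun.
Proof.
split.
- move=> X HX; exact: valid_prep.
- move=> X Y t HX HY Ht g /=.
  case: HX => HmX _ _ _ _; case: HY => HmY _ _ _ _.
  by rewrite ((L_2intw t HmX HmY).1 Ht g).
- by [].
- by [].
Qed.

Lemma Fun_ff : fully_faithful Fun.
Proof.
move=> X Y HX HY; split; first by [].
move=> g Hg; exists g; split=> //.
case: HX => HmX _ _ _ _; case: HY => HmY _ _ _ _.
apply/(L_2intw g HmX HmY) => x; by rewrite Hg.
Qed.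

Definition mkI r (S : s2obj G -> 'M[C]_r) : intw F F' :=
  @Intw G F F' (@Mor11 r (fun a => 1%:M))
    (fun x => castmx (esym (muln1 r), esym (mul1n r)) (S x)).

Lemma Pm_mkI r (S : s2obj G -> 'M[C]_r) x : Pm (mkI S) x = S x.
Proof. by apply: mxeqE; apply: mxeq_castL; exact: mxeq_castl. Qed.

Lemma mkI_mor11 r (S : s2obj G -> 'M[C]_r) : is_mor11 (ifun (mkI S)).
Proof.
split=> [a|]; first exact: unitmx1.
apply: mxeqE; apply: mxeq_trans (mxeq_scalar _ (muln1 r)) (mxeq_sym (mxeq_castl _ _)).
Qed.

Hypothesis HB : forall phi : s2mor G,
  b (gamma_inv (s2dom phi) phi) = b' (gamma_inv (s2dom phi) phi).

Lemma Fun_es : ess_surj Fun.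
Proof.
case=> r S [Su S1 SM]; rewrite /= in Su S1 SM.
have Hm := mkI_mor11 S.
exists (mkI S); split.
  split => //.
  - by move=> x; apply: (proj2 (L_inv (mkI S) x)); rewrite Pm_mkI.
  - by move=> phi; apply: (proj2 (L_nat phi Hm)); rewrite scal1_r scal1_l HB.
  - move=> x y; apply: (proj2 (L_F2 x y Hm)).
    rewrite scal1_r -mulmxA scal1_l !Pm_mkI SM Hz scalerA.
    by rewrite mulrCA mulfV ?mulr1.
  - by apply: (proj2 (L_F0 Hm)); rewrite Pm_mkI S1 mulmx1.
exists (1%:M : 'M[C]_r); split.
  by move=> g /=; rewrite Pm_mkI mul1mx mulmx1.
exists (1%:M : 'M[C]_r); split.
- by move=> g /=; rewrite Pm_mkI mul1mx mulmx1.
- by rewrite /= mulmx1.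
- by rewrite /= mulmx1.
Qed.

End Fun.


Lemma unit0_dim n (A : 'M[C]_n) : A \in unitmx -> A = 0 -> n = 0%N.
Proof.
case: n A => // n A; rewrite unitmxE => U E; move: U; by rewrite E det0 unitr0.
Qed.

Section Part1.
Variable G : special2group.
Variables (b b' : s2mor G -> C) (c c' : s2obj G -> s2obj G -> C).
Local Notation F := (Ichar b c).
Local Notation F' := (Ichar b' c').
Variable u : s2mor G.
Hypothesis upi : in_pi1 u.
Hypothesis ub : b u <> b' u.

Lemma valid_r0 (X : intw F F') : is_intw X -> mr (ifun X) = 0%N.
Proof.
case=> Hm Hinv Hnat _ _.
have E := (L_nat u Hm).1 (Hnat u).
have U := (L_inv X (s2dom u)).1 (Hinv (s2dom u)).
apply: (unit0_dim U).
move: E; rewrite scal1_r scal1_l upi gamma_inv_e // => /eqP.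
rewrite -subr_eq0 -scalerBl scalemx_eq0 subr_eq0 => /orP [/eqP E|/eqP //].
by case: ub.
Qed.

Definition UF : functor (HomCat F F') unitCat :=
  @Functor (HomCat F F') unitCat (fun _ => tt) (fun _ _ _ => tt).

Lemma part1 : cat_equiv (HomCat F F') unitCat.
Proof.
exists UF; split.
- by split.
- move=> X Y HX HY; split.
    move=> f f' _ _ _; apply: mx_dim0c; exact: valid_r0.
  move=> [] _; exists 0; split => // x.
  apply: mx_dim0c; by rewrite /= (valid_r0 HX).
- move=> [] _.
  have Hm := mkI_mor11 b b' c c' (fun _ : s2obj G => (0 : 'M[C]_0)).
  exists (mkI b b' c c' (fun _ : s2obj G => (0 : 'M[C]_0))); split.
    split => //.
    - by move=> x; exists 0; split; apply: mx_dim0r.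
    - by move=> phi; apply: mx_dim0r.
    - by move=> x y; apply: mx_dim0r.
    - by apply: mx_dim0r.
  by exists tt; split => //; exists tt.
Qed.

End Part1.


Section Mon.
Variable G : special2group.
Variables (b : s2mor G -> C) (c : s2obj G -> s2obj G -> C).
Local Notation F := (Ichar b c).

Lemma g_unit f a : is_mor11 f -> mgauge f a \in unitmx.
Proof. by case=> H _; exact: H. Qed.

Lemma Pm_comp (X Y : intw F F) g : is_mor11 (ifun X) ->
  Pm (intw_comp X Y) g = mgauge (ifun X) (mr (ifun Y))
     *m (Pm X g *t Pm Y g) *m invmx (mgauge (ifun X) (mr (ifun Y))).
Proof.
move=> HX.
have U := g_unit (mr (ifun Y)) HX.
set s := mgauge (ifun X) (mr (ifun Y)).
have E1 : hcomp (ifun X) (ifun X) (comp11 (Fob F g) (ifun Y))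
            (comp11 (ifun Y) (Fob F g)) (id2 (ifun X)) (iPhi Y g)
          =~ s *m (1%:M *t Pm Y g) *m invmx s.
  rewrite /hcomp /id2.
  apply: mxeq_mul; last first.
    by apply: mxeq_inv; apply: mxeq_gauge; rewrite /= mul1n.
  apply: mxeq_mul; first by apply: mxeq_gauge; rewrite /= muln1.
  apply: mxeq_tens; [exact: mxeq_refl | exact: Pm_eq].
have E2 : hcomp (comp11 (Fob F g) (ifun X)) (comp11 (ifun X) (Fob F g))
            (ifun Y) (ifun Y) (iPhi X g) (id2 (ifun Y))
          =~ s *m (Pm X g *t 1%:M) *m invmx s.
  rewrite /hcomp /id2.
  apply: mxeq_mul; last first.
    by apply: mxeq_inv; exact: g_comp_1f.
  apply: mxeq_mul; first exact: g_comp_f1.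
  apply: mxeq_tens; [exact: Pm_eq | exact: mxeq_refl].
apply: mxeqE; apply: mxeq_trans (mxeq_sym (Pm_eq _ _)) _.
rewrite /intw_comp /=; apply: mxeq_castL.
apply: mxeq_trans (mxeq_mul E1 (mxeq_castL _ E2)) _.
rewrite -!mulmxA (mulmxA (invmx s)) mulVmx // mul1mx.
rewrite !mulmxA -(mulmxA s) tensmx_mul mul1mx mulmx1; exact: mxeq_refl.
Qed.

Definition MF : monfunctor (EndMon F) (RepMon G) :=
  @MonFunctor (EndMon F) (RepMon G) (Fun b b c c (fun _ _ => 1))
    (fun X Y => mgauge (ifun X) (mr (ifun Y))) (1%:M : 'M[C]_1).

Hypothesis cnz : forall x y, c x y != 0.

Lemma Pm_id g : Pm (intw_id F) g = 1%:M.
Proof. apply: mxeqE; apply: mxeq_castL; apply: mxeq_castL; exact: mxeq_refl. Qed.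

Lemma MF_strong : is_strong_monoidal MF.
Proof.
have Hz : forall x y, (fun _ _ => 1) x y = c x y / c x y.
  by move=> x y; rewrite divff.
split; first split.
- exact: (Fun_functor b b cnz Hz).
- move=> X Y HX HY.
  case: HX => HmX _ _ _ _.
  have U := g_unit (mr (ifun Y)) HmX.
  split.
    move=> g /=; rewrite Pm_comp // mulmxKV //.
  exists (invmx (mgauge (ifun X) (mr (ifun Y)))); split.
  + move=> g /=; rewrite Pm_comp // !mulmxA mulVmx // mul1mx //.
  + by rewrite /= mulVmx.
  + by rewrite /= mulmxV.
- split.
    by move=> g /=; rewrite Pm_id !mul1mx.
  exists (1%:M : 'M[C]_1); split.
  + by move=> g /=; rewrite Pm_id !mul1mx.
  + by rewrite /= mulmx1.
  + by rewrite /= mulmx1.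
split.
- move=> X X' Y Y' f g HX HX' HY HY' _ _ /=.
  case: HX => HmX _ _ _ _.
  by rewrite /hcomp mulmxKV //; exact: g_unit.
- move=> X Y Z HX HY HZ /=.
  case: HX => HmX _ _ _ _.
  rewrite -(mulmxA _ (invmx _ *t _)) tensmx_mul mulVmx ?g_unit // mul1mx tens11 mulmx1.
  apply: mxeqE; apply: mxeq_trans (mxeq_mul (mxeq_castl _ _) (mxeq_castl _ _)) _.
  rewrite mul1mx; apply: mxeq_sym.
  apply: mxeq_trans (mxeq_mul (mxeq_refl _) (mxeq_mul (mxeq_refl _) (mxeq_castl _ _))) _.
  rewrite mulmx1; exact: mxeq_refl.
- move=> X HX /=.
  rewrite tens11; apply: mxeqE.
  apply: mxeq_trans (mxeq_mul (mxeq_castl _ _) (mxeq_mul (mxeq_castl _ _)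
     (mxeq_scalar 1 (mul1n _)))) _.
  rewrite !mul1mx; apply: mxeq_sym; exact: mxeq_castl.
- move=> X HX /=.
  case: HX => HmX _ _ _ _.
  rewrite tens11; apply: mxeqE.
  apply: mxeq_trans (mxeq_mul (mxeq_castl _ _) (mxeq_mul (g_one HmX)
     (mxeq_scalar 1 (muln1 _)))) _.
  rewrite !mul1mx; apply: mxeq_sym; exact: mxeq_castl.
Qed.

End Mon.


Lemma cocy_alg (a1 a2 a3 a4 e1 e2 e3 e4 : C) :
  e1 != 0 -> e2 != 0 -> e3 != 0 -> e4 != 0 ->
  a1 != 0 -> a2 != 0 -> a3 != 0 -> a4 != 0 ->
  a1 * a2 / (a3 * a4) = e1 * e2 / (e3 * e4) ->
  a1 / e1 * (a2 / e2) / (a3 / e3 * (a4 / e4)) = 1.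
Proof.
move=> h1 h2 h3 h4 g1 g2 g3 g4 E.
have -> : a1 / e1 * (a2 / e2) / (a3 / e3 * (a4 / e4))
  = (a1 * a2 / (a3 * a4)) / (e1 * e2 / (e3 * e4)).
  by field; rewrite ?h1 ?h2 ?h3 ?h4 ?g1 ?g2 ?g3 ?g4 /=.
rewrite E divff //.
by rewrite !mulf_neq0 ?invr_neq0 ?mulf_neq0.
Qed.

Unset Implicit Arguments.

Theorem mainTheorem16 (G : special2group)
    (b b' : s2mor G -> C) (c c' : s2obj G -> s2obj G -> C) :
  char_data b c -> char_data b' c' ->
  [/\ (exists u, in_pi1 u /\ b u <> b' u) ->
        cat_equiv (HomCat (Ichar b c) (Ichar b' c')) unitCat,
      (forall u, in_pi1 u -> b u = b' u) ->
        is_2cocycle (fun x y => c' x y / c x y) /\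
        cat_equiv (HomCat (Ichar b c) (Ichar b' c'))
                  (PRepCat G (fun x y => c' x y / c x y)) &
      monoidal_equiv (EndMon (Ichar b c)) (RepMon G)].
Proof.
move=> [_ [cnz _ cob]] [_ [cnz' _ cob']].
split.
- case=> u [upi ub]; exact: part1 upi ub.
- move=> Hb.
  have HB : forall phi : s2mor G,
      b (gamma_inv (s2dom phi) phi) = b' (gamma_inv (s2dom phi) phi).
    by move=> phi; apply: Hb; exact: gamma_inv_pi1.
  have Hz : forall x y, c' x y / c x y = c' x y / c x y by [].
  split.
    split.
      by move=> x y; rewrite mulf_neq0 ?invr_neq0.
    move=> x y w; rewrite /cobound2; apply: cocy_alg => //.
    move: (cob' x y w) (cob x y w); rewrite /cobound2 => -> ->.
    by rewrite Hb //; apply: gamma_inv_pi1; rewrite s2dom_assoc.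
  exists (Fun b b' c c' (fun x y => c' x y / c x y)); split.
  + exact: (Fun_functor b b' cnz Hz).
  + exact: (Fun_ff (b:=b) (b':=b') (c:=c) (c':=c') (fun x y => c' x y / c x y)).
  + exact: (Fun_es cnz Hz HB).
- exists (MF b c); split.
  + exact: (@MF_strong G b c cnz).
  + exact: (Fun_ff (b:=b) (b':=b) (c:=c) (c':=c) (fun _ _ => 1)).
  + have Hz : forall x y, (fun _ _ => 1) x y = c x y / c x y.
      by move=> x y; rewrite divff.
    exact: (Fun_es cnz Hz (fun _ => erefl)).
Qed.
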